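(* Let $\alpha\neq0$ be real, let $\mathbf{u}=(u_1,u_2)$ and $\mathbf{v}=(-u_1,u_2)$ be constant unit vectors with $u_1u_2\neq0$, and let $\mathbf{f}=(f_1,f_2)\in C_c^2(S^1;\mathbb{D})$. Then $D_\mathbf{u}D_\mathbf{v}\mathcal{L}_\alpha\mathbf{f}=\partial_{\tilde x_1}f_2-\partial_{\tilde x_2}f_1=\tilde\delta^\perp\mathbf{f}$ and $D_\mathbf{u}D_\mathbf{v}\mathcal{T}_\alpha\mathbf{f}=-(\partial_{\tilde x_1}f_1+\partial_{\tilde x_2}f_2)=-\tilde\delta\mathbf{f}$.
   Context: $\mathbb{D}$ is the open unit disc in $\mathbb{R}^2$; $C_c^2(S^1;\mathbb{D})$ is the space of $C^2$ vector fields with compact support in $\mathbb{D}$. $\mathbf{a}^\perp=(-a_2,a_1)$; $D_\mathbf{u}=\mathbf{u}\cdot\nabla$. The weighted longitudinal and transverse V-line transforms are $\mathcal{L}_\alpha\mathbf{f}(\mathbf{x})=-\int_0^\infty\mathbf{u}\cdot\mathbf{f}(\mathbf{x}+t\mathbf{u})\,dt+\alpha\int_0^\infty\mathbf{v}\cdot\mathbf{f}(\mathbf{x}+t\mathbf{v})\,dt$ and $\mathcal{T}_\alpha\mathbf{f}(\mathbf{x})=-\int_0^\infty\mathbf{u}^\perp\cdot\mathbf{f}(\mathbf{x}+t\mathbf{u})\,dt+\alpha\int_0^\infty\mathbf{v}^\perp\cdot\mathbf{f}(\mathbf{x}+t\mathbf{v})\,dt$. The differential operators $\partial_{\tilde x_1}=-(1+\alpha)u_1u_2\partial_{x_1}+(1-\alpha)u_2^2\partial_{x_2}$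 and $\partial_{\tilde x_2}=(1-\alpha)u_1^2\partial_{x_1}-(1+\alpha)u_1u_2\partial_{x_2}$ (derivatives in the linear coordinates $\tilde x$ with $x_1=-(1+\alpha)u_1u_2\tilde x_1+(1-\alpha)u_1^2\tilde x_2$, $x_2=(1-\alpha)u_2^2\tilde x_1-(1+\alpha)u_1u_2\tilde x_2$); $\tilde\delta\mathbf{f}=\partial_{\tilde x_1}f_1+\partial_{\tilde x_2}f_2$, $\tilde\delta^\perp\mathbf{f}=\partial_{\tilde x_1}f_2-\partial_{\tilde x_2}f_1$. *)

(* Defs.v *)
From Stdlib Require Import Reals.
From Coquelicot Require Export Coquelicot.
Open Scope R_scope.

Definition sfield := R -> R -> R.

Definition d1 (g : sfield) : sfield := fun x1 x2 => Derive (fun y => g y x2) x1.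
Definition d2 (g : sfield) : sfield := fun x1 x2 => Derive (fun y => g x1 y) x2.

Definition Ddir (a1 a2 : R) (g : sfield) : sfield :=
  fun x1 x2 => a1 * d1 g x1 x2 + a2 * d2 g x1 x2.

Definition cont2 (g : sfield) : Prop :=
  forall p : R * R, continuous (fun q : R * R => g (fst q) (snd q)) p.

Definition C2 (g : sfield) : Prop :=
  (forall x1 x2, ex_derive (fun y => g y x2) x1) /\
  (forall x1 x2, ex_derive (fun y => g x1 y) x2) /\
  (forall x1 x2, ex_derive (fun y => d1 g y x2) x1) /\
  (forall x1 x2, ex_derive (fun y => d1 g x1 y) x2) /\
  (forall x1 x2, ex_derive (fun y => d2 g y x2) x1) /\
  (forall x1 x2, ex_derive (fun y => d2 g x1 y) x2) /\
  cont2 g /\ cont2 (d1 g) /\ cont2 (d2 g) /\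
  cont2 (d1 (d1 g)) /\ cont2 (d2 (d1 g)) /\
  cont2 (d1 (d2 g)) /\ cont2 (d2 (d2 g)).

(* compact support contained in the open unit disc D:
   the support lies in a closed disc of radius r < 1 *)
Definition supp_in_disc (g : sfield) : Prop :=
  exists r, 0 <= r < 1 /\ forall x1 x2, r ^ 2 < x1 ^ 2 + x2 ^ 2 -> g x1 x2 = 0.

Definition Cc2_disc (f1 f2 : sfield) : Prop :=
  C2 f1 /\ C2 f2 /\ supp_in_disc f1 /\ supp_in_disc f2.

Definition int0inf (h : R -> R) : R :=
  RInt_gen h (at_point 0) (Rbar_locally p_infty).

Definition Ltr (alpha u1 u2 v1 v2 : R) (f1 f2 : sfield) : sfield :=
  fun x1 x2 =>
    - int0inf (fun t => u1 * f1 (x1 + t * u1) (x2 + t * u2)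
                        + u2 * f2 (x1 + t * u1) (x2 + t * u2))
    + alpha * int0inf (fun t => v1 * f1 (x1 + t * v1) (x2 + t * v2)
                                + v2 * f2 (x1 + t * v1) (x2 + t * v2)).

(* weighted transverse V-line transform; a^perp = (-a2, a1) *)
Definition Ttr (alpha u1 u2 v1 v2 : R) (f1 f2 : sfield) : sfield :=
  fun x1 x2 =>
    - int0inf (fun t => (- u2) * f1 (x1 + t * u1) (x2 + t * u2)
                        + u1 * f2 (x1 + t * u1) (x2 + t * u2))
    + alpha * int0inf (fun t => (- v2) * f1 (x1 + t * v1) (x2 + t * v2)
                                + v1 * f2 (x1 + t * v1) (x2 + t * v2)).

Definition dt1 (alpha u1 u2 : R) (g : sfield) : sfield :=
  fun x1 x2 => - (1 + alpha) * u1 * u2 * d1 g x1 x2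
               + (1 - alpha) * u2 ^ 2 * d2 g x1 x2.
Definition dt2 (alpha u1 u2 : R) (g : sfield) : sfield :=
  fun x1 x2 => (1 - alpha) * u1 ^ 2 * d1 g x1 x2
               - (1 + alpha) * u1 * u2 * d2 g x1 x2.

Definition tdelta (alpha u1 u2 : R) (f1 f2 : sfield) : sfield :=
  fun x1 x2 => dt1 alpha u1 u2 f1 x1 x2 + dt2 alpha u1 u2 f2 x1 x2.
Definition tdelta_perp (alpha u1 u2 : R) (f1 f2 : sfield) : sfield :=
  fun x1 x2 => dt1 alpha u1 u2 f2 x1 x2 - dt2 alpha u1 u2 f1 x1 x2.

(* Main.v *)
Require Import Defs.
From Stdlib Require Import Reals Lra Psatz FunctionalExtensionality.
From Coquelicot Require Import Coquelicot.
Import Defs.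
Open Scope R_scope.

Lemma C1_diff (f : sfield) x y :
  (forall u v, ex_derive (fun z => f z v) u) ->
  (forall u v, ex_derive (fun z => f u z) v) ->
  continuity_2d_pt (d1 f) x y -> continuity_2d_pt (d2 f) x y ->
  differentiable_pt_lim f x y (d1 f x y) (d2 f x y).
Proof.
  intros H1 H2 C1 C2 eps.
  assert (he : 0 < eps/2) by (destruct eps; simpl; lra).
  destruct (C1 (mkposreal _ he)) as [da Hda].
  destruct (C2 (mkposreal _ he)) as [db Hdb].
  assert (hd : 0 < Rmin da db) by (apply Rmin_pos; apply cond_pos).
  exists (mkposreal _ hd). simpl. intros u v Hu Hv.
  assert (Hua : Rabs (u - x) < da) by (eapply Rlt_le_trans; [apply Hu| apply Rmin_l]).
  assert (Hva : Rabs (v - y) < da) by (eapply Rlt_le_trans; [apply Hv| apply Rmin_l]).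
  assert (Hvb : Rabs (v - y) < db) by (eapply Rlt_le_trans; [apply Hv| apply Rmin_r]).
  destruct (MVT_gen (fun z => f z v) x u (fun z => d1 f z v)) as [c [Hc Ec]].
  { intros z _. apply Derive_correct. apply H1. }
  { intros z _. apply continuity_pt_filterlim. apply (ex_derive_continuous (fun z => f z v)). apply H1. }
  destruct (MVT_gen (fun z => f x z) y v (fun z => d2 f x z)) as [e [He Ee]].
  { intros z _. apply Derive_correct. apply H2. }
  { intros z _. apply continuity_pt_filterlim. apply (ex_derive_continuous (fun z => f x z)). apply H2. }
  simpl in Ec, Ee.
  assert (Hc' : Rabs (c - x) < da).
  { eapply Rle_lt_trans; [|exact Hua].
    unfold Rmin, Rmax in Hc. destruct (Rle_dec x u); unfold Rabs;
    destruct (Rcase_abs (c - x)); destruct (Rcase_abs (u - x)); lra. }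
  assert (He' : Rabs (e - y) < db).
  { eapply Rle_lt_trans; [|exact Hvb].
    unfold Rmin, Rmax in He. destruct (Rle_dec y v); unfold Rabs;
    destruct (Rcase_abs (e - y)); destruct (Rcase_abs (v - y)); lra. }
  specialize (Hda c v Hc' Hva). simpl in Hda.
  assert (Hx0 : Rabs (x - x) < da) by (rewrite Rminus_eq_0, Rabs_R0; apply cond_pos).
  assert (Hx1 : Rabs (x - x) < db) by (rewrite Rminus_eq_0, Rabs_R0; apply cond_pos).
  specialize (Hdb x e Hx1 He'). simpl in Hdb.
  replace (f u v - f x y - (d1 f x y * (u - x) + d2 f x y * (v - y)))
    with ((d1 f c v - d1 f x y) * (u - x) + (d2 f x e - d2 f x y) * (v - y))
    by (rewrite <- Rminus_plus_distr in *; lra).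
  eapply Rle_trans; [apply Rabs_triang|].
  rewrite !Rabs_mult.
  assert (M1 : Rabs (u - x) <= Rmax (Rabs (u - x)) (Rabs (v - y))) by apply Rmax_l.
  assert (M2 : Rabs (v - y) <= Rmax (Rabs (u - x)) (Rabs (v - y))) by apply Rmax_r.
  pose proof (Rabs_pos (u - x)). pose proof (Rabs_pos (v - y)).
  pose proof (Rabs_pos (d1 f c v - d1 f x y)). pose proof (Rabs_pos (d2 f x e - d2 f x y)).
  nra.
Qed.

Lemma cont2_pt (h : sfield) x y : cont2 h -> continuity_2d_pt h x y.
Proof. intros H. apply continuity_2d_pt_filterlim. apply (H (x, y)). Qed.

Lemma cont2_comp (g P Q : sfield) x y :
  cont2 g -> continuous (fun q : R * R => P (fst q) (snd q)) (x, y) ->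
  continuous (fun q : R * R => Q (fst q) (snd q)) (x, y) ->
  continuity_2d_pt (fun u v => g (P u v) (Q u v)) x y.
Proof.
  intros Hg HP HQ. apply continuity_2d_pt_filterlim.
  apply (continuous_comp_2 (fun q : R * R => P (fst q) (snd q))
                           (fun q : R * R => Q (fst q) (snd q)) g (x, y)); auto.
Qed.

Lemma cont_aff (c k l : R) (p : R * R) :
  continuous (fun q : R * R => c + fst q * k + snd q * l) p.
Proof.
  destruct p as [x y].
  apply (continuous_plus (fun q : R * R => c + fst q * k) (fun q : R * R => snd q * l)).
  apply (continuous_plus (fun q : R * R => c) (fun q : R * R => fst q * k)).
  apply continuous_const.
  apply (continuous_mult (fun q : R * R => fst q) (fun q : R * R => k)).
  apply continuous_fst. apply continuous_const.
  apply (continuous_mult (fun q : R * R => snd q) (fun q : R * R => l)).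
  apply continuous_snd. apply continuous_const.
Qed.

Lemma cont1 (h : sfield) x y a1 a2 t0 : cont2 h ->
  continuous (fun t => h (x + t * a1) (y + t * a2)) t0.
Proof.
  intros H.
  apply (continuous_comp_2 (fun t => x + t * a1) (fun t => y + t * a2) h t0).
  apply (ex_derive_continuous (fun t => x + t * a1)); auto_derive; auto.
  apply (ex_derive_continuous (fun t => y + t * a2)); auto_derive; auto.
  apply H.
Qed.

Definition supp (g : sfield) :=
  exists R0, 0 <= R0 /\ forall x1 x2, R0 < x1 ^ 2 + x2 ^ 2 -> g x1 x2 = 0.

Lemma supp_d1 (g : sfield) R0 : (forall x1 x2, R0 < x1 ^ 2 + x2 ^ 2 -> g x1 x2 = 0) ->
  forall x1 x2, R0 < x1 ^ 2 + x2 ^ 2 -> d1 g x1 x2 = 0.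
Proof.
  intros H x1 x2 Hx. unfold d1.
  rewrite (Derive_ext_loc _ (fun _ => 0)). apply Derive_const.
  assert (Hc : continuous (fun t => t ^ 2 + x2 ^ 2) x1)
    by (apply (ex_derive_continuous (fun t => t ^ 2 + x2 ^ 2)); auto_derive; auto).
  assert (L := Hc (fun w => R0 < w) (open_gt R0 _ Hx)).
  eapply filter_imp; [|exact L]. intros t Ht. apply H. exact Ht.
Qed.

Lemma supp_d2 (g : sfield) R0 : (forall x1 x2, R0 < x1 ^ 2 + x2 ^ 2 -> g x1 x2 = 0) ->
  forall x1 x2, R0 < x1 ^ 2 + x2 ^ 2 -> d2 g x1 x2 = 0.
Proof.
  intros H x1 x2 Hx. unfold d2.
  rewrite (Derive_ext_loc _ (fun _ => 0)). apply Derive_const.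
  assert (Hc : continuous (fun t => x1 ^ 2 + t ^ 2) x2)
    by (apply (ex_derive_continuous (fun t => x1 ^ 2 + t ^ 2)); auto_derive; auto).
  assert (L := Hc (fun w => R0 < w) (open_gt R0 _ Hx)).
  eapply filter_imp; [|exact L]. intros t Ht. apply H. exact Ht.
Qed.

Lemma ray_out a1 a2 R0 x y t : a1 ^ 2 + a2 ^ 2 = 1 -> 0 <= R0 ->
  2 * (Rabs x + Rabs y) + R0 + 1 <= t -> R0 < (x + t * a1) ^ 2 + (y + t * a2) ^ 2.
Proof.
  intros Ha HR Ht.
  assert (B1 : -1 <= a1 <= 1) by nra.
  assert (B2 : -1 <= a2 <= 1) by nra.
  assert (X1 : - Rabs x <= x * a1).
  { unfold Rabs; destruct (Rcase_abs x); nra. }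
  assert (Y1 : - Rabs y <= y * a2).
  { unfold Rabs; destruct (Rcase_abs y); nra. }
  pose proof (Rabs_pos x). pose proof (Rabs_pos y).
  assert (E : (x + t * a1) ^ 2 + (y + t * a2) ^ 2 =
              x ^ 2 + y ^ 2 + 2 * t * (x * a1 + y * a2) + t ^ 2 * (a1 ^ 2 + a2 ^ 2)) by ring.
  rewrite E, Ha.
  assert (T1 : 1 <= t) by lra.
  assert (t * (x * a1 + y * a2) >= - t * (Rabs x + Rabs y)) by nra.
  nra.
Qed.

Lemma int0inf_fin (h : R -> R) M : 0 <= M -> (forall t, M <= t -> h t = 0) ->
  ex_RInt h 0 M ->
  is_RInt_gen h (at_point 0) (Rbar_locally p_infty) (RInt h 0 M).
Proof.
  intros HM Hh Hex.
  assert (A : is_RInt_gen h (at_point 0) (at_point M) (RInt h 0 M)).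
  { apply is_RInt_gen_at_point. exact (RInt_correct h 0 M Hex). }
  assert (B : is_RInt_gen h (at_point M) (Rbar_locally p_infty) 0).
  { assert (Z : is_RInt_gen (Derive (fun _ : R => 0)) (at_point M) (Rbar_locally p_infty) (0 - 0)).
    { apply is_RInt_gen_Derive.
      - apply filter_forall. intros. apply ex_derive_const.
      - apply filter_forall. intros. eapply continuous_ext.
        intros; symmetry; apply Derive_const. apply continuous_const.
      - apply filterlim_const.
      - apply filterlim_const. }
    replace (0 - 0) with 0 in Z by ring.
    eapply is_RInt_gen_ext; [|exact Z].
    apply Filter_prod with (Q := fun a => a = M) (R := fun b => M < b).
    + reflexivity.
    + exists M; auto.
    + intros a b -> Hb x [Hx1 Hx2]. simpl in *. rewrite Derive_const.
      rewrite Rmin_left in Hx1 by lra. symmetry; apply Hh. lra. }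
  pose proof (is_RInt_gen_Chasles h M _ _ A B) as C.
  replace (RInt h 0 M) with (plus (RInt h 0 M) 0) at 1. exact C.
  unfold plus; simpl; ring.
Qed.

Lemma int0inf_eq (h : R -> R) M : 0 <= M -> (forall t, M <= t -> h t = 0) ->
  ex_RInt h 0 M -> int0inf h = RInt h 0 M.
Proof.
  intros. unfold int0inf. apply is_RInt_gen_unique. apply int0inf_fin; auto.
Qed.

Definition Iray (a1 a2 : R) (g : sfield) : sfield :=
  fun x y => int0inf (fun t => g (x + t * a1) (y + t * a2)).

Lemma Iray_eq a1 a2 g R0 x y M : a1 ^ 2 + a2 ^ 2 = 1 -> 0 <= R0 ->
  (forall x1 x2, R0 < x1 ^ 2 + x2 ^ 2 -> g x1 x2 = 0) -> cont2 g ->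
  2 * (Rabs x + Rabs y) + R0 + 1 <= M ->
  Iray a1 a2 g x y = RInt (fun t => g (x + t * a1) (y + t * a2)) 0 M.
Proof.
  intros Ha HR Hs Hc HM. unfold Iray. apply int0inf_eq.
  - pose proof (Rabs_pos x). pose proof (Rabs_pos y). lra.
  - intros t Ht. apply Hs. apply ray_out; auto. lra.
  - apply (ex_RInt_continuous (V := R_CompleteNormedModule)). intros. apply cont1; auto.
Qed.

Lemma Iray_correct a1 a2 g x y : a1 ^ 2 + a2 ^ 2 = 1 -> cont2 g -> supp g ->
  is_RInt_gen (fun t => g (x + t * a1) (y + t * a2)) (at_point 0)
    (Rbar_locally p_infty) (Iray a1 a2 g x y).
Proof.
  intros Ha Hc [R0 [HR Hs]].
  rewrite (Iray_eq a1 a2 g R0 x y (2 * (Rabs x + Rabs y) + R0 + 1)); auto; try lra.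
  apply int0inf_fin.
  - pose proof (Rabs_pos x). pose proof (Rabs_pos y). lra.
  - intros t Ht. apply Hs. apply ray_out; auto.
  - apply (ex_RInt_continuous (V := R_CompleteNormedModule)). intros. apply cont1; auto.
Qed.

Lemma Iray_lin a1 a2 c1 c2 g1 g2 x y : a1 ^ 2 + a2 ^ 2 = 1 ->
  cont2 g1 -> supp g1 -> cont2 g2 -> supp g2 ->
  Iray a1 a2 (fun u v => c1 * g1 u v + c2 * g2 u v) x y
  = c1 * Iray a1 a2 g1 x y + c2 * Iray a1 a2 g2 x y.
Proof.
  intros Ha C1 S1 C2 S2. unfold Iray at 1, int0inf.
  apply is_RInt_gen_unique.
  exact (is_RInt_gen_plus _ _ _ _ (is_RInt_gen_scal _ c1 _ (Iray_correct a1 a2 g1 x y Ha C1 S1))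
           (is_RInt_gen_scal _ c2 _ (Iray_correct a1 a2 g2 x y Ha C2 S2))).
Qed.

Definition C1c (g : sfield) :=
  (forall x y, ex_derive (fun z => g z y) x) /\
  (forall x y, ex_derive (fun z => g x z) y) /\
  cont2 g /\ cont2 (d1 g) /\ cont2 (d2 g) /\ supp g.

Lemma Derive_shift (G : R -> R) c u : ex_derive G (u + c) ->
  Derive (fun z => G (z + c)) u = Derive G (u + c).
Proof.
  intros H. rewrite (Derive_comp G (fun z => z + c)); auto.
  replace (Derive (fun z => z + c) u) with 1. ring.
  symmetry; apply is_derive_unique; auto_derive; auto; ring.
  auto_derive; auto.
Qed.

Lemma Rabs_near x z : Rabs (z - x) < 1 -> Rabs z <= Rabs x + 1.
Proof. unfold Rabs; destruct (Rcase_abs (z - x)); destruct (Rcase_abs z); destruct (Rcase_abs x); lra. Qed.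

Lemma Iray_d1 a1 a2 g x y : a1 ^ 2 + a2 ^ 2 = 1 -> C1c g ->
  is_derive (fun z => Iray a1 a2 g z y) x (Iray a1 a2 (d1 g) x y).
Proof.
  intros Ha [Hd1 [Hd2 [Cg [Cd1 [Cd2 [R0 [HR Hs]]]]]]].
  set (M := 2 * (Rabs x + 1 + Rabs y) + R0 + 1).
  rewrite (Iray_eq a1 a2 (d1 g) R0 x y M); auto; [| apply supp_d1; auto | unfold M; lra].
  apply is_derive_ext_loc with (f := fun z => RInt (fun t => g (z + t * a1) (y + t * a2)) 0 M).
  - exists (mkposreal 1 Rlt_0_1). intros z Hz. change (Rabs (z - x) < 1) in Hz.
    apply Rabs_near in Hz.
    symmetry; apply (Iray_eq a1 a2 g R0 z y M); auto. unfold M; lra.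
  - replace (RInt (fun t => d1 g (x + t * a1) (y + t * a2)) 0 M)
      with (RInt (fun t => Derive (fun u => g (u + t * a1) (y + t * a2)) x) 0 M).
    + apply (is_derive_RInt_param (fun z t => g (z + t * a1) (y + t * a2)) 0 M x).
      * apply filter_forall. intros z t _.
        apply (ex_derive_comp (fun w => g w (y + t * a2)) (fun u => u + t * a1)).
        apply Hd1. auto_derive; auto.
      * intros t _.
        apply continuity_2d_pt_ext with (f := fun u v => d1 g (u + v * a1) (y + v * a2)).
        { intros u v. unfold d1. symmetry.
          apply (Derive_shift (fun w => g w (y + v * a2))). apply Hd1. }
        apply cont2_comp; auto.
        apply (continuous_ext (fun q : R * R => 0 + fst q * 1 + snd q * a1)).
        intros; simpl; ring. apply cont_aff.
        apply (continuous_ext (fun q : R * R => y + fst q * 0 + snd q * a2)).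
        intros; simpl; ring. apply cont_aff.
      * apply filter_forall. intros z.
        apply (ex_RInt_continuous (V := R_CompleteNormedModule)). intros. apply cont1; auto.
    + apply RInt_ext. intros t _. unfold d1.
      apply (Derive_shift (fun w => g w (y + t * a2))). apply Hd1.
Qed.

Lemma Iray_d2 a1 a2 g x y : a1 ^ 2 + a2 ^ 2 = 1 -> C1c g ->
  is_derive (fun z => Iray a1 a2 g x z) y (Iray a1 a2 (d2 g) x y).
Proof.
  intros Ha [Hd1 [Hd2 [Cg [Cd1 [Cd2 [R0 [HR Hs]]]]]]].
  set (M := 2 * (Rabs x + 1 + Rabs y + 1) + R0 + 1).
  rewrite (Iray_eq a1 a2 (d2 g) R0 x y M); auto; [| apply supp_d2; auto | unfold M; lra].
  apply is_derive_ext_loc with (f := fun z => RInt (fun t => g (x + t * a1) (z + t * a2)) 0 M).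
  - exists (mkposreal 1 Rlt_0_1). intros z Hz. change (Rabs (z - y) < 1) in Hz.
    apply Rabs_near in Hz.
    symmetry; apply (Iray_eq a1 a2 g R0 x z M); auto. unfold M; lra.
  - replace (RInt (fun t => d2 g (x + t * a1) (y + t * a2)) 0 M)
      with (RInt (fun t => Derive (fun u => g (x + t * a1) (u + t * a2)) y) 0 M).
    + apply (is_derive_RInt_param (fun z t => g (x + t * a1) (z + t * a2)) 0 M y).
      * apply filter_forall. intros z t _.
        apply (ex_derive_comp (fun w => g (x + t * a1) w) (fun u => u + t * a2)).
        apply Hd2. auto_derive; auto.
      * intros t _.
        apply continuity_2d_pt_ext with (f := fun u v => d2 g (x + v * a1) (u + v * a2)).
        { intros u v. unfold d2. symmetry.
          apply (Derive_shift (fun w => g (x + v * a1) w)). apply Hd2. }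
        apply cont2_comp; auto.
        apply (continuous_ext (fun q : R * R => x + fst q * 0 + snd q * a1)).
        intros; simpl; ring. apply cont_aff.
        apply (continuous_ext (fun q : R * R => 0 + fst q * 1 + snd q * a2)).
        intros; simpl; ring. apply cont_aff.
      * apply filter_forall. intros z.
        apply (ex_RInt_continuous (V := R_CompleteNormedModule)). intros. apply cont1; auto.
    + apply RInt_ext. intros t _. unfold d2.
      apply (Derive_shift (fun w => g (x + t * a1) w)). apply Hd2.
Qed.

Lemma Iray_D a1 a2 g x y : a1 ^ 2 + a2 ^ 2 = 1 -> C1c g ->
  a1 * Iray a1 a2 (d1 g) x y + a2 * Iray a1 a2 (d2 g) x y = - g x y.
Proof.
  intros Ha [Hd1 [Hd2 [Cg [Cd1 [Cd2 [R0 [HR Hs]]]]]]].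
  set (M := 2 * (Rabs x + Rabs y) + R0 + 1).
  assert (HM : 0 <= M) by (pose proof (Rabs_pos x); pose proof (Rabs_pos y); unfold M; lra).
  rewrite (Iray_eq a1 a2 (d1 g) R0 x y M); auto; [| apply supp_d1; auto | unfold M; lra].
  rewrite (Iray_eq a1 a2 (d2 g) R0 x y M); auto; [| apply supp_d2; auto | unfold M; lra].
  set (F1 := fun t => d1 g (x + t * a1) (y + t * a2)).
  set (F2 := fun t => d2 g (x + t * a1) (y + t * a2)).
  assert (E1 : ex_RInt F1 0 M).
  { apply (ex_RInt_continuous (V := R_CompleteNormedModule)). intros. apply cont1; auto. }
  assert (E2 : ex_RInt F2 0 M).
  { apply (ex_RInt_continuous (V := R_CompleteNormedModule)). intros. apply cont1; auto. }
  assert (H4 : is_RInt (fun t => d1 g (x + t * a1) (y + t * a2) * a1 + d2 g (x + t * a1) (y + t * a2) * a2) 0 M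
                 (a1 * RInt F1 0 M + a2 * RInt F2 0 M)).
  { apply is_RInt_ext with (f := fun t => plus (scal a1 (F1 t)) (scal a2 (F2 t))).
    { intros t _. unfold F1, F2, plus, scal; simpl. unfold mult; simpl. ring. }
    exact (is_RInt_plus _ _ _ _ _ _ (is_RInt_scal _ _ _ a1 _ (RInt_correct F1 0 M E1))
                                   (is_RInt_scal _ _ _ a2 _ (RInt_correct F2 0 M E2))). }
  assert (H3 : is_RInt (fun t => d1 g (x + t * a1) (y + t * a2) * a1 + d2 g (x + t * a1) (y + t * a2) * a2) 0 M
                 (minus (g (x + M * a1) (y + M * a2)) (g (x + 0 * a1) (y + 0 * a2)))).
  { apply (is_RInt_derive (V := R_CompleteNormedModule) (fun t => g (x + t * a1) (y + t * a2))).
    - intros t _. apply is_derive_Reals.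
      apply (derivable_pt_lim_comp_2d g (fun t => x + t * a1) (fun t => y + t * a2)).
      + apply C1_diff; auto; apply cont2_pt; auto.
      + apply is_derive_Reals. auto_derive; auto; ring.
      + apply is_derive_Reals. auto_derive; auto; ring.
    - intros t _.
      apply (continuous_plus (fun t => d1 g (x + t * a1) (y + t * a2) * a1)
                             (fun t => d2 g (x + t * a1) (y + t * a2) * a2)).
      + apply (continuous_mult (fun t => d1 g (x + t * a1) (y + t * a2)) (fun _ => a1)).
        apply cont1; auto. apply continuous_const.
      + apply (continuous_mult (fun t => d2 g (x + t * a1) (y + t * a2)) (fun _ => a2)).
        apply cont1; auto. apply continuous_const. }
  pose proof (is_RInt_unique _ _ _ _ H4) as U4.
  pose proof (is_RInt_unique _ _ _ _ H3) as U3.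
  rewrite U4 in U3.
  rewrite (Hs (x + M * a1) (y + M * a2)) in U3 by (apply ray_out; auto; unfold M; lra).
  replace (x + 0 * a1) with x in U3 by ring. replace (y + 0 * a2) with y in U3 by ring.
  rewrite U3. unfold minus, plus, opp; simpl. ring.
Qed.

Lemma supp_d1' g : supp g -> supp (d1 g).
Proof. intros [R0 [HR H]]. exists R0. split; auto. apply supp_d1; auto. Qed.
Lemma supp_d2' g : supp g -> supp (d2 g).
Proof. intros [R0 [HR H]]. exists R0. split; auto. apply supp_d2; auto. Qed.

Lemma mainG a1 a2 b1 b2 alpha gu gv x1 x2 :
  a1 ^ 2 + a2 ^ 2 = 1 -> b1 ^ 2 + b2 ^ 2 = 1 ->
  C1c gu -> C1c (Ddir b1 b2 gu) -> C1c gv ->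
  Ddir a1 a2 (Ddir b1 b2 (fun x y => - Iray a1 a2 gu x y + alpha * Iray b1 b2 gv x y)) x1 x2
  = Ddir b1 b2 gu x1 x2 - alpha * Ddir a1 a2 gv x1 x2.
Proof.
  intros Ha Hb Cu Ch Cv.
  assert (Cu' := Cu). assert (Cv' := Cv). assert (Ch' := Ch).
  destruct Cu' as [Hu1 [Hu2 [Cgu [Cu1 [Cu2 Su]]]]].
  destruct Cv' as [Hv1 [Hv2 [Cgv [Cv1 [Cv2 Sv]]]]].
  destruct Ch' as [Hh1 [Hh2 [Cgh [Ch1 [Ch2 Sh]]]]].
  set (L := fun x y => - Iray a1 a2 gu x y + alpha * Iray b1 b2 gv x y).
  set (h := Ddir b1 b2 gu).
  assert (S1 : Ddir b1 b2 L = fun y z => - Iray a1 a2 h y z - alpha * gv y z).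
  { apply functional_extensionality; intro y; apply functional_extensionality; intro z.
    assert (D1 : d1 L y z = - Iray a1 a2 (d1 gu) y z + alpha * Iray b1 b2 (d1 gv) y z).
    { unfold d1 at 1, L.
      rewrite Derive_plus.
      rewrite Derive_opp, Derive_scal.
      replace (Derive (fun w : R => Iray a1 a2 gu w z) y) with (Iray a1 a2 (d1 gu) y z) by (symmetry; apply is_derive_unique; apply Iray_d1; auto).
      replace (Derive (fun w : R => Iray b1 b2 gv w z) y) with (Iray b1 b2 (d1 gv) y z) by (symmetry; apply is_derive_unique; apply Iray_d1; auto). reflexivity.
      apply (ex_derive_opp (fun w => Iray a1 a2 gu w z)). eexists. apply (Iray_d1 a1 a2 gu y z Ha Cu).
      apply ex_derive_scal. eexists. apply (Iray_d1 b1 b2 gv y z Hb Cv). }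
    assert (D2 : d2 L y z = - Iray a1 a2 (d2 gu) y z + alpha * Iray b1 b2 (d2 gv) y z).
    { unfold d2 at 1, L.
      rewrite Derive_plus.
      rewrite Derive_opp, Derive_scal.
      replace (Derive (Iray a1 a2 gu y) z) with (Iray a1 a2 (d2 gu) y z) by (symmetry; apply is_derive_unique; apply Iray_d2; auto).
      replace (Derive (Iray b1 b2 gv y) z) with (Iray b1 b2 (d2 gv) y z) by (symmetry; apply is_derive_unique; apply Iray_d2; auto). reflexivity.
      apply (ex_derive_opp (fun w => Iray a1 a2 gu y w)). eexists. apply (Iray_d2 a1 a2 gu y z Ha Cu).
      apply ex_derive_scal. eexists. apply (Iray_d2 b1 b2 gv y z Hb Cv). }
    transitivity (b1 * d1 L y z + b2 * d2 L y z). reflexivity.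
    rewrite D1, D2.
    assert (K := Iray_D b1 b2 gv y z Hb Cv).
    assert (K2 : Iray a1 a2 h y z = b1 * Iray a1 a2 (d1 gu) y z + b2 * Iray a1 a2 (d2 gu) y z).
    { unfold h. change (Ddir b1 b2 gu) with (fun u v => b1 * d1 gu u v + b2 * d2 gu u v).
      apply Iray_lin; auto. apply supp_d1'; auto. apply supp_d2'; auto. }
    rewrite K2.
    replace (gv y z) with (-(b1 * Iray b1 b2 (d1 gv) y z + b2 * Iray b1 b2 (d2 gv) y z)) by lra.
    ring. }
  rewrite S1.
  assert (D1 : d1 (fun y z => - Iray a1 a2 h y z - alpha * gv y z) x1 x2
               = - Iray a1 a2 (d1 h) x1 x2 - alpha * d1 gv x1 x2).
  { unfold d1 at 1.
    rewrite Derive_minus.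
    rewrite Derive_opp, Derive_scal.
    replace (Derive (fun w : R => Iray a1 a2 h w x2) x1) with (Iray a1 a2 (d1 h) x1 x2) by (symmetry; apply is_derive_unique; apply Iray_d1; auto). reflexivity.
    apply (ex_derive_opp (fun w => Iray a1 a2 h w x2)). eexists. apply (Iray_d1 a1 a2 h x1 x2 Ha Ch).
    apply ex_derive_scal. apply Hv1. }
  assert (D2 : d2 (fun y z => - Iray a1 a2 h y z - alpha * gv y z) x1 x2
               = - Iray a1 a2 (d2 h) x1 x2 - alpha * d2 gv x1 x2).
  { unfold d2 at 1.
    rewrite Derive_minus.
    rewrite Derive_opp, Derive_scal.
    replace (Derive (Iray a1 a2 h x1) x2) with (Iray a1 a2 (d2 h) x1 x2) by (symmetry; apply is_derive_unique; apply Iray_d2; auto). reflexivity.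
    apply (ex_derive_opp (fun w => Iray a1 a2 h x1 w)). eexists. apply (Iray_d2 a1 a2 h x1 x2 Ha Ch).
    apply ex_derive_scal. apply Hv2. }
  transitivity (a1 * d1 (fun y z => - Iray a1 a2 h y z - alpha * gv y z) x1 x2
              + a2 * d2 (fun y z => - Iray a1 a2 h y z - alpha * gv y z) x1 x2).
  reflexivity.
  rewrite D1, D2.
  assert (K := Iray_D a1 a2 h x1 x2 Ha Ch).
  unfold Ddir.
  replace (h x1 x2) with (-(a1 * Iray a1 a2 (d1 h) x1 x2 + a2 * Iray a1 a2 (d2 h) x1 x2)) by lra.
  ring.
Qed.

Lemma d1_lin c1 c2 (g1 g2 : sfield) x y :
  ex_derive (fun z => g1 z y) x -> ex_derive (fun z => g2 z y) x ->
  d1 (fun u v => c1 * g1 u v + c2 * g2 u v) x y = c1 * d1 g1 x y + c2 * d1 g2 x y.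
Proof.
  intros H1 H2. unfold d1. rewrite Derive_plus.
  rewrite !Derive_scal. reflexivity.
  apply ex_derive_scal; auto. apply ex_derive_scal; auto.
Qed.

Lemma d2_lin c1 c2 (g1 g2 : sfield) x y :
  ex_derive (fun z => g1 x z) y -> ex_derive (fun z => g2 x z) y ->
  d2 (fun u v => c1 * g1 u v + c2 * g2 u v) x y = c1 * d2 g1 x y + c2 * d2 g2 x y.
Proof.
  intros H1 H2. unfold d2. rewrite Derive_plus.
  rewrite !Derive_scal. reflexivity.
  apply ex_derive_scal; auto. apply ex_derive_scal; auto.
Qed.

Lemma cont2_lin c1 c2 (g1 g2 : sfield) : cont2 g1 -> cont2 g2 ->
  cont2 (fun u v => c1 * g1 u v + c2 * g2 u v).
Proof.
  intros H1 H2 p.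
  apply (continuous_plus (fun q : R * R => c1 * g1 (fst q) (snd q))
                         (fun q : R * R => c2 * g2 (fst q) (snd q))).
  apply (continuous_mult (fun _ : R * R => c1) (fun q : R * R => g1 (fst q) (snd q))).
  apply continuous_const. apply H1.
  apply (continuous_mult (fun _ : R * R => c2) (fun q : R * R => g2 (fst q) (snd q))).
  apply continuous_const. apply H2.
Qed.

Lemma C1c_lin c1 c2 g1 g2 : C1c g1 -> C1c g2 ->
  C1c (fun u v => c1 * g1 u v + c2 * g2 u v).
Proof.
  intros [A1 [B1 [C1 [D1 [E1 [R1 [HR1 S1]]]]]]] [A2 [B2 [C2 [D2 [E2 [R2 [HR2 S2]]]]]]].
  split; [|split; [|split; [|split; [|split]]]].
  - intros x y. apply (ex_derive_plus (fun z => c1 * g1 z y) (fun z => c2 * g2 z y));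
    apply ex_derive_scal; auto.
  - intros x y. apply (ex_derive_plus (fun z => c1 * g1 x z) (fun z => c2 * g2 x z));
    apply ex_derive_scal; auto.
  - apply cont2_lin; auto.
  - replace (d1 (fun u v => c1 * g1 u v + c2 * g2 u v))
      with (fun u v => c1 * d1 g1 u v + c2 * d1 g2 u v).
    apply cont2_lin; auto.
    apply functional_extensionality; intro u; apply functional_extensionality; intro v.
    symmetry; apply d1_lin; auto.
  - replace (d2 (fun u v => c1 * g1 u v + c2 * g2 u v))
      with (fun u v => c1 * d2 g1 u v + c2 * d2 g2 u v).
    apply cont2_lin; auto.
    apply functional_extensionality; intro u; apply functional_extensionality; intro v.
    symmetry; apply d2_lin; auto.
  - exists (Rmax R1 R2). split. eapply Rle_trans; [exact HR1| apply Rmax_l].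
    intros x1 x2 H. rewrite S1, S2. ring.
    eapply Rle_lt_trans; [apply Rmax_r| exact H].
    eapply Rle_lt_trans; [apply Rmax_l| exact H].
Qed.

Lemma C2_C1c f : C2 f -> supp f -> C1c f /\ C1c (d1 f) /\ C1c (d2 f).
Proof.
  intros [A [B [C [D [E [F [G [H [I [J [K [L M]]]]]]]]]]]] S.
  split; [|split].
  - repeat split; auto.
  - repeat split; auto. apply supp_d1'; auto.
  - repeat split; auto. apply supp_d2'; auto.
Qed.

Lemma C1c_Ddir b1 b2 c1 c2 f1 f2 : C2 f1 -> C2 f2 -> supp f1 -> supp f2 ->
  C1c (Ddir b1 b2 (fun x y => c1 * f1 x y + c2 * f2 x y)).
Proof.
  intros H1 H2 S1 S2.
  pose proof H1 as [A1 [B1 _]]. pose proof H2 as [A2 [B2 _]].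
  destruct (C2_C1c f1 H1 S1) as [_ [K1 L1]].
  destruct (C2_C1c f2 H2 S2) as [_ [K2 L2]].
  replace (Ddir b1 b2 (fun x y => c1 * f1 x y + c2 * f2 x y))
    with (fun x y => b1 * (fun u v => c1 * d1 f1 u v + c2 * d1 f2 u v) x y
                   + b2 * (fun u v => c1 * d2 f1 u v + c2 * d2 f2 u v) x y).
  - apply C1c_lin; apply C1c_lin; auto.
  - apply functional_extensionality; intro u; apply functional_extensionality; intro v.
    unfold Ddir. rewrite d1_lin, d2_lin; auto.
Qed.

Lemma supp_disc f : supp_in_disc f -> supp f.
Proof.
  intros [r [Hr H]]. exists (r ^ 2). split. nra. auto.
Qed.

Lemma alg_lin a1 a2 b1 b2 alpha c1 c2 e1 e2 f1 f2 x y : C2 f1 -> C2 f2 ->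
  Ddir b1 b2 (fun x y => c1 * f1 x y + c2 * f2 x y) x y
  - alpha * Ddir a1 a2 (fun x y => e1 * f1 x y + e2 * f2 x y) x y
  = b1 * (c1 * d1 f1 x y + c2 * d1 f2 x y) + b2 * (c1 * d2 f1 x y + c2 * d2 f2 x y)
    - alpha * (a1 * (e1 * d1 f1 x y + e2 * d1 f2 x y) + a2 * (e1 * d2 f1 x y + e2 * d2 f2 x y)).
Proof.
  intros [A1 [B1 _]] [A2 [B2 _]].
  unfold Ddir. rewrite !d1_lin, !d2_lin; auto.
Qed.

Theorem lemma7p1 (alpha u1 u2 : R) (f1 f2 : R -> R -> R) :
  alpha <> 0 ->
  u1 ^ 2 + u2 ^ 2 = 1 ->
  u1 * u2 <> 0 ->
  Cc2_disc f1 f2 ->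
  (forall x1 x2 : R,
     Ddir u1 u2 (Ddir (- u1) u2 (Ltr alpha u1 u2 (- u1) u2 f1 f2)) x1 x2
     = dt1 alpha u1 u2 f2 x1 x2 - dt2 alpha u1 u2 f1 x1 x2
   /\ dt1 alpha u1 u2 f2 x1 x2 - dt2 alpha u1 u2 f1 x1 x2
     = tdelta_perp alpha u1 u2 f1 f2 x1 x2) /\
  (forall x1 x2 : R,
     Ddir u1 u2 (Ddir (- u1) u2 (Ttr alpha u1 u2 (- u1) u2 f1 f2)) x1 x2
     = - (dt1 alpha u1 u2 f1 x1 x2 + dt2 alpha u1 u2 f2 x1 x2)
   /\ - (dt1 alpha u1 u2 f1 x1 x2 + dt2 alpha u1 u2 f2 x1 x2)
     = - tdelta alpha u1 u2 f1 f2 x1 x2).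
Proof.
  intros Hal Hu Huv [H1 [H2 [S1 S2]]].
  apply supp_disc in S1. apply supp_disc in S2.
  assert (Hv : (- u1) ^ 2 + u2 ^ 2 = 1) by (rewrite <- Hu; ring).
  destruct (C2_C1c f1 H1 S1) as [F1 _].
  destruct (C2_C1c f2 H2 S2) as [F2 _].
  split; intros x1 x2; split; try reflexivity.
  - change (Ltr alpha u1 u2 (- u1) u2 f1 f2) with
      (fun x y => - Iray u1 u2 (fun x y => u1 * f1 x y + u2 * f2 x y) x y
                  + alpha * Iray (- u1) u2 (fun x y => (- u1) * f1 x y + u2 * f2 x y) x y).
    rewrite mainG; auto.
    + rewrite alg_lin; auto. unfold dt1, dt2. ring.
    + apply C1c_lin; auto.
    + apply C1c_Ddir; auto.
    + apply C1c_lin; auto.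
  - change (Ttr alpha u1 u2 (- u1) u2 f1 f2) with
      (fun x y => - Iray u1 u2 (fun x y => (- u2) * f1 x y + u1 * f2 x y) x y
                  + alpha * Iray (- u1) u2 (fun x y => (- u2) * f1 x y + (- u1) * f2 x y) x y).
    rewrite mainG; auto.
    + rewrite alg_lin; auto. unfold dt1, dt2. ring.
    + apply C1c_lin; auto.
    + apply C1c_Ddir; auto.
    + apply C1c_lin; auto.
Qed.
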